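(* Let $q(x)$ be a multilinear polynomial over $\mathbb{R}^n$ of degree at most $d$ with $\mathrm{sparsity}(q)=T$. Then for $\mathbf{x}$ uniformly distributed on $\{0,1\}^n$, the random variable $q(\mathbf{x})$ takes at least $\frac{1}{2d^2}\log(T)-2$ distinct output values.
   Context: A multilinear polynomial of degree at most $d$ is $q(x)=\sum_{|S|\le d}\widehat{q}(S)\prod_{i\in S}x_i$; $\mathrm{sparsity}(q)$ is its number of nonzero coefficients. $\log$ denotes the logarithm to base $2$. *)

(* Defs.v *)
From mathcomp Require Import all_boot all_order all_algebra.
From mathcomp Require Import reals exp.
Set Implicit Arguments. Unset Strict Implicit. Unset Printing Implicit Defensive.
Import Order.TTheory GRing.Theory Num.Theory.
Local Open Scope ring_scope.

(* A multilinear polynomial over R in n variables, given by its coefficient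
   function S |-> \hat q(S) on subsets S of {0,...,n-1}. *)
Definition mlpoly (R : realType) (n : nat) := {ffun {set 'I_n} -> R}.

Definition deg_le (R : realType) (n : nat) (q : mlpoly R n) (d : nat) : Prop :=
  forall S : {set 'I_n}, q S != 0 -> (#|S| <= d)%N.

Definition sparsity (R : realType) (n : nat) (q : mlpoly R n) : nat :=
  #|[set S : {set 'I_n} | q S != 0]|.

Definition ml_eval (R : realType) (n : nat) (q : mlpoly R n)
    (x : {ffun 'I_n -> bool}) : R :=
  \sum_(S : {set 'I_n}) q S * \prod_(i in S) (x i)%:R.

(* number of distinct values of q(x) as x ranges over {0,1}^n
   (= size of the support of q(x) for x uniform on {0,1}^n) *)
Definition num_values (R : realType) (n : nat) (q : mlpoly R n) : nat :=
  size (undup [seq ml_eval q x | x <- enum {: {ffun 'I_n -> bool}}]).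

Definition log2 (R : realType) (x : R) : R := ln x / ln 2.

(* Main.v *)
Require Import Defs.
From mathcomp Require Import all_boot all_order all_algebra.
From mathcomp Require Import reals exp.
From mathcomp Require Import ring lra zify.
Import Order.TTheory GRing.Theory Num.Theory.
Local Open Scope ring_scope.

Set Implicit Arguments. Unset Strict Implicit. Unset Printing Implicit Defensive.

Definition symd (n : nat) (A B : {set 'I_n}) : {set 'I_n} :=
  [set i | (i \in A) (+) (i \in B)].

Definition chi (R : realFieldType) (n : nat) (S X : {set 'I_n}) : R :=
  \prod_i (if (i \in S) && (i \in X) then -1 else 1).

Lemma in_symd n (A B : {set 'I_n}) i : (i \in symd A B) = (i \in A) (+) (i \in B).
Proof. by rewrite inE. Qed.

Lemma symdK n (A B : {set 'I_n}) : symd A (symd A B) = B.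
Proof. by apply/setP => i; rewrite !in_symd; case: (i \in A); case: (i \in B). Qed.

Lemma symdC n (A B : {set 'I_n}) : symd A B = symd B A.
Proof. by apply/setP => i; rewrite !in_symd addbC. Qed.

Lemma symd_eq0 n (A B : {set 'I_n}) : (symd A B == set0) = (A == B).
Proof.
apply/eqP/eqP => [h|->].
  apply/setP => i; move/setP: h => /(_ i).
  by rewrite in_symd inE; case: (i \in A); case: (i \in B).
by apply/setP => i; rewrite in_symd inE addbb.
Qed.

Lemma chi_mulS (R : realFieldType) n (S T X : {set 'I_n}) :
  chi R S X * chi R T X = chi R (symd S T) X.
Proof.
rewrite /chi -big_split /=; apply: eq_bigr => i _; rewrite in_symd.
by case: (i \in S); case: (i \in T); case: (i \in X); rewrite /= ?mulr1 ?mul1r ?mulrNN ?mulr1.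
Qed.

Lemma chi_mulX (R : realFieldType) n (S X Y : {set 'I_n}) :
  chi R S X * chi R S Y = chi R S (symd X Y).
Proof.
rewrite /chi -big_split /=; apply: eq_bigr => i _; rewrite in_symd.
by case: (i \in S); case: (i \in X); case: (i \in Y); rewrite /= ?mulr1 ?mul1r ?mulrNN ?mulr1.
Qed.

Lemma chiC (R : realFieldType) n (S X : {set 'I_n}) : chi R S X = chi R X S.
Proof. by rewrite /chi; apply: eq_bigr => i _; rewrite andbC. Qed.

Lemma chi0 (R : realFieldType) n (X : {set 'I_n}) : chi R set0 X = 1.
Proof. by rewrite /chi big1 // => i _; rewrite inE. Qed.

Lemma chi1 (R : realFieldType) n (S : {set 'I_n}) j :
  chi R S [set j] = if j \in S then -1 else 1.
Proof.
rewrite /chi (bigD1 j) //= inE eqxx andbT big1 ?mulr1 // => i /negPf ij.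
by rewrite inE ij andbF.
Qed.

Lemma sum_invol_0 (R : realFieldType) (T : finType) (f : T -> R) (s : T -> T) :
  involutive s -> (forall x, f (s x) = - f x) -> \sum_x f x = 0.
Proof.
move=> si hf.
have h : \sum_x f x = \sum_x f (s x).
  by rewrite (reindex_inj (can_inj si)).
have : \sum_x f x = - \sum_x f x by rewrite {1}h -sumrN; apply: eq_bigr.
move=> e; lra.
Qed.

Lemma card_sets n : #|{: {set 'I_n}}| = (2 ^ n)%N.
Proof. by rewrite -cardsT -powersetT card_powerset cardsT card_ord. Qed.

Lemma sum_chi (R : realFieldType) n (A : {set 'I_n}) :
  \sum_X chi R A X = if A == set0 then (2 ^ n)%:R else 0.
Proof.
case: eqP => [->|/eqP/set0Pn [j jA]].
  under eq_bigr do rewrite chi0.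
  by rewrite sumr_const card_sets.
apply: (sum_invol_0 (s := fun X => symd X [set j])).
  by move=> X; apply/setP => i; rewrite !in_symd -addbA addbb addbF.
by move=> X; rewrite -chi_mulX chi1 jA mulrN1.
Qed.

Lemma parseval (R : realFieldType) n (b : {set 'I_n} -> R) :
  \sum_X (\sum_S b S * chi R S X) ^+ 2 = (2 ^ n)%:R * \sum_S b S ^+ 2.
Proof.
transitivity (\sum_X \sum_S \sum_T (b S * b T) * chi R (symd S T) X).
  apply: eq_bigr => X _; rewrite expr2 mulr_suml; apply: eq_bigr => S _.
  rewrite mulr_sumr; apply: eq_bigr => T _; rewrite -chi_mulS; ring.
rewrite exchange_big /= mulr_sumr; apply: eq_bigr => S _.
rewrite exchange_big /= (bigD1 S) //= [X in _ + X]big1 ?addr0.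
  by rewrite -mulr_sumr sum_chi symd_eq0 eqxx; ring.
move=> T /negPf TS; rewrite -mulr_sumr sum_chi symd_eq0 eq_sym TS; ring.
Qed.

Definition lowdeg (R : realFieldType) n (D : nat) (g : {set 'I_n} -> R) :=
  exists a : {set 'I_n} -> R, (forall S : {set 'I_n}, (D < #|S|)%N -> a S = 0) /\
    forall X, g X = \sum_S a S * chi R S X.

Lemma lowdeg_ext (R : realFieldType) n D (g h : {set 'I_n} -> R) :
  g =1 h -> lowdeg D g -> lowdeg D h.
Proof. by move=> e [a [h1 h2]]; exists a; split => // X; rewrite -e. Qed.

Lemma lowdeg_weaken (R : realFieldType) n D D' (g : {set 'I_n} -> R) :
  (D <= D')%N -> lowdeg D g -> lowdeg D' g.
Proof.
move=> le [a [h1 h2]]; exists a; split => //; move=> S lt; apply: h1.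
exact: leq_ltn_trans lt.
Qed.

Lemma lowdeg_chi (R : realFieldType) n (T : {set 'I_n}) : lowdeg #|T| (chi R T).
Proof.
exists (fun S => if S == T then 1 else 0); split.
  by move=> S; case: eqP => // ->; rewrite ltnn.
move=> X; rewrite (bigD1 T) //= eqxx mul1r big1 ?addr0 // => S /negPf ->.
by rewrite mul0r.
Qed.

Lemma lowdeg_const (R : realFieldType) n (c : R) : lowdeg 0 (fun _ : {set 'I_n} => c).
Proof.
apply: (lowdeg_ext (g := fun X => c * chi R set0 X)).
  by move=> X; rewrite chi0 mulr1.
have [a [h1 h2]] := lowdeg_chi R (set0 : {set 'I_n}).
exists (fun S => c * a S); split.
  by move=> S lt; rewrite h1 ?mulr0 // cards0.
by move=> X; rewrite h2 mulr_sumr; apply: eq_bigr => S _; rewrite mulrA.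
Qed.

Lemma lowdeg_scale (R : realFieldType) n D (c : R) (g : {set 'I_n} -> R) :
  lowdeg D g -> lowdeg D (fun X => c * g X).
Proof.
move=> [a [h1 h2]]; exists (fun S => c * a S); split.
  by move=> S /h1 ->; rewrite mulr0.
by move=> X; rewrite h2 mulr_sumr; apply: eq_bigr => S _; rewrite mulrA.
Qed.

Lemma lowdeg_add (R : realFieldType) n D (g h : {set 'I_n} -> R) :
  lowdeg D g -> lowdeg D h -> lowdeg D (fun X => g X + h X).
Proof.
move=> [a [h1 h2]] [b [h3 h4]]; exists (fun S => a S + b S); split.
  by move=> S lt; rewrite h1 // h3 // addr0.
by move=> X; rewrite h2 h4 -big_split /=; apply: eq_bigr => S _; rewrite mulrDl.
Qed.

Lemma lowdeg_mul (R : realFieldType) n D1 D2 (g h : {set 'I_n} -> R) :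
  lowdeg D1 g -> lowdeg D2 h -> lowdeg (D1 + D2) (fun X => g X * h X).
Proof.
move=> [a [h1 h2]] [b [h3 h4]].
exists (fun U => \sum_S a S * b (symd S U)); split.
  move=> U lt; apply: big1 => S _.
  have : (#|U| <= #|S| + #|symd S U|)%N.
    apply: leq_trans (leq_card_setU S (symd S U)).
    apply: subset_leq_card; apply/subsetP => i iU.
    by rewrite !inE iU; case: (i \in S).
  case: (ltnP D1 #|S|) => [/h1 -> | le1 le2]; first by rewrite mul0r.
  by rewrite h3 ?mulr0 //; lia.
move=> X; rewrite h2 h4 mulr_suml.
transitivity (\sum_S \sum_U a S * b (symd S U) * chi R U X).
  apply: eq_bigr => S _; rewrite mulr_sumr.
  rewrite (reindex_inj (h := fun U => symd S U)); last first.
    by move=> U V /= e; rewrite -(symdK S U) e symdK.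
  apply: eq_bigr => U _ /=; have e := chi_mulS R S (symd S U) X.
  by rewrite symdK in e; rewrite -e; ring.
rewrite exchange_big /=; apply: eq_bigr => U _; rewrite mulr_suml.
by apply: eq_bigr.
Qed.

Lemma lowdeg_sum (R : realFieldType) n D (I : Type) (s : seq I)
    (f : I -> {set 'I_n} -> R) :
  (forall i, lowdeg D (f i)) -> lowdeg D (fun X => \sum_(i <- s) f i X).
Proof.
move=> hf; elim: s => [|i s IH].
  apply: (lowdeg_ext (g := fun _ => 0)); first by move=> X; rewrite big_nil.
  by apply: (lowdeg_weaken (leq0n D)); apply: lowdeg_const.
apply: (lowdeg_ext (g := fun X => f i X + \sum_(j <- s) f j X)).
  by move=> X; rewrite big_cons.
exact: lowdeg_add.
Qed.

Lemma lowdeg_prod (R : realFieldType) n (D : nat) (I : eqType) (s : seq I)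
    (f : I -> {set 'I_n} -> R) :
  (forall i, i \in s -> lowdeg D (f i)) ->
  lowdeg (D * size s) (fun X => \prod_(i <- s) f i X).
Proof.
elim: s => [|i s IH] hf.
  apply: (lowdeg_ext (g := fun _ => 1)); first by move=> X; rewrite big_nil.
  by rewrite muln0; exact: lowdeg_const.
apply: (lowdeg_ext (g := fun X => f i X * \prod_(j <- s) f j X)).
  by move=> X; rewrite big_cons.
rewrite /= mulnS; apply: lowdeg_mul; first by apply: hf; rewrite inE eqxx.
by apply: IH => j js; apply: hf; rewrite inE js orbT.
Qed.

Lemma infl_bound (R : realFieldType) n D (g : {set 'I_n} -> R) :
  lowdeg D g ->
  \sum_i \sum_X (g X - g (symd X [set i])) ^+ 2 <= 4 * D%:R * \sum_X g X ^+ 2.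
Proof.
move=> [a [h1 h2]].
have e1 : forall i X, g X - g (symd X [set i]) =
    \sum_(S : {set 'I_n}) (if i \in S then 2 * a S else 0) * chi R S X.
  move=> i X; rewrite !h2 -sumrB; apply: eq_bigr => S _.
  rewrite -chi_mulX chi1; case: (i \in S); ring.
under eq_bigr do under eq_bigr do rewrite e1.
under eq_bigr do rewrite parseval.
under [X in _ <= _ * X]eq_bigr do rewrite h2.
rewrite parseval -mulr_sumr exchange_big /=.
rewrite mulrA [_ * (2 ^ n)%:R]mulrC -mulrA ler_pM2l ?ltr0n ?expn_gt0 //.
rewrite mulr_sumr; apply: ler_sum => S _.
have -> : \sum_i (if i \in S then 2 * a S else 0) ^+ 2 = 4 * a S ^+ 2 * #|S|%:R.
  rewrite (bigID (fun i => i \in S)) /= [X in _ + X]big1; last by move=> i /negPf ->; rewrite expr0n.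
  rewrite addr0; under eq_bigr => i iS do rewrite iS.
  by rewrite sumr_const -mulr_natr; ring.
case: (leqP #|S| D) => le.
  have : (#|S|%:R <= D%:R :> R) by rewrite ler_nat.
  have := sqr_ge0 (a S); nra.
by rewrite h1 // expr0n /= !(mulr0, mul0r).
Qed.

Definition Fq (R : realType) n (q : mlpoly R n) (X : {set 'I_n}) : R :=
  ml_eval q [ffun i => i \in X].

Lemma prod_ind (R : realType) n (S X : {set 'I_n}) :
  \prod_(i in S) ((i \in X) : nat)%:R = (S \subset X)%:R :> R.
Proof.
case: (boolP (S \subset X)) => [/subsetP h | /subsetPn [j jS jX]].
  by rewrite big1 // => i /h ->.
by rewrite (bigD1 j) //= (negPf jX) mul0r.
Qed.

Lemma Fq_sub (R : realType) n (q : mlpoly R n) X :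
  Fq q X = \sum_S q S * (S \subset X)%:R.
Proof.
rewrite /Fq /ml_eval; apply: eq_bigr => S _; rewrite -prod_ind.
by congr (_ * _); apply: eq_bigr => i _; rewrite ffunE.
Qed.

Lemma lowdeg_ind (R : realType) n (i : 'I_n) :
  lowdeg 1 (fun X => ((i \in X) : nat)%:R : R).
Proof.
apply: (lowdeg_ext (g := fun X => 2^-1 + (- 2^-1) * chi R [set i] X)).
  by move=> X; rewrite chiC chi1; case: (i \in X) => /=; field.
apply: lowdeg_add; first exact: (lowdeg_weaken (leq0n 1) (lowdeg_const _ _)).
apply: lowdeg_scale; rewrite -(cards1 i); exact: lowdeg_chi.
Qed.

Lemma lowdeg_Fq (R : realType) n (q : mlpoly R n) d :
  deg_le q d -> lowdeg d (Fq q).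
Proof.
move=> hd.
apply: (lowdeg_ext (g := fun X => \sum_(S <- enum {: {set 'I_n}})
   q S * \prod_(i <- enum S) ((i \in X) : nat)%:R)).
  move=> X; rewrite /Fq /ml_eval big_enum /=; apply: eq_bigr => S _.
  by rewrite big_enum /=; congr (_ * _); apply: eq_bigr => i _; rewrite ffunE.
apply: lowdeg_sum => S.
case: (eqVneq (q S) 0) => [->|nz].
  apply: (lowdeg_ext (g := fun _ => 0)); first by move=> X; rewrite mul0r.
  exact: (lowdeg_weaken (leq0n d) (lowdeg_const _ _)).
apply: lowdeg_scale; apply: (lowdeg_weaken (D := 1 * size (enum S))).
  by rewrite mul1n -cardE; exact: hd.
by apply: lowdeg_prod => i _; exact: lowdeg_ind.
Qed.

Lemma subset_symd1 n (B M : {set 'I_n}) j : j \in M ->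
  (symd B [set j] \subset M) = (B \subset M).
Proof.
move=> jM; apply/idP/idP => /subsetP h; apply/subsetP => y; move: (h y);
  rewrite !inE; case: (eqVneq y j) => [-> _ _ | _] //; by rewrite ?addbF.
Qed.

Lemma sign_symd1 (R : realFieldType) n (B : {set 'I_n}) j :
  (-1) ^+ #|symd B [set j]| = - (-1) ^+ #|B| :> R.
Proof.
case: (boolP (j \in B)) => jB.
  have -> : symd B [set j] = B :\ j.
    by apply/setP => y; rewrite !inE; case: (eqVneq y j) => [->|]; rewrite ?jB ?addbF ?andbT.
  by rewrite (cardsD1 j B) jB exprS mulN1r opprK.
have -> : symd B [set j] = j |: B.
  by apply/setP => y; rewrite !inE; case: (eqVneq y j) => [->|]; rewrite ?(negPf jB) ?addbF.
by rewrite cardsU1 jB exprS mulN1r.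
Qed.

Lemma sub_symd1 n (S Y : {set 'I_n}) j : j \notin S ->
  (S \subset symd Y [set j]) = (S \subset Y).
Proof.
move=> jS; apply/idP/idP => /subsetP h; apply/subsetP => y yS; move: (h y yS);
  rewrite !inE; case: (eqVneq y j) => [e|_]; rewrite ?addbF //.
by move: jS; rewrite -e yS.
by move: jS; rewrite -e yS.
Qed.


Lemma alt_sum (R : realType) n (q : mlpoly R n) (M Z : {set 'I_n}) :
  (forall S : {set 'I_n}, q S != 0 -> M \subset S -> S = M) ->
  Z \subset ~: M ->
  \sum_(B : {set 'I_n}) (if B \subset M then (-1) ^+ #|B| * Fq q (Z :|: B) else 0)
    = (-1) ^+ #|M| * q M.
Proof.
move=> maxM ZM.
pose G (S B : {set 'I_n}) : R := if B \subset M then (-1) ^+ #|B| * (S \subset Z :|: B)%:R else 0.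
transitivity (\sum_S q S * \sum_B G S B).
  under eq_bigr do rewrite Fq_sub mulr_sumr.
  rewrite (eq_bigr (fun B => \sum_S (q S * G S B))); last first.
    move=> B _; rewrite /G; case: (B \subset M); last by rewrite big1 // => S _; rewrite mulr0.
    by apply: eq_bigr => S _; ring.
  by rewrite exchange_big /=; apply: eq_bigr => S _; rewrite mulr_sumr.
rewrite (bigD1 M) //= [X in _ + X]big1 ?addr0; last first.
  move=> S SM; case: (eqVneq (q S) 0) => [->|nz]; first by rewrite mul0r.
  have : ~~ (M \subset S) by apply/negP => /(maxM _ nz) e; move: SM; rewrite e eqxx.
  case/subsetPn => j jM jS.
  rewrite (@sum_invol_0 _ _ (G S) (fun B => symd B [set j])) ?mulr0 //.
    by move=> B; apply/setP => y; rewrite !in_symd -addbA addbb addbF.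
  move=> B; rewrite /G subset_symd1 //; case: (B \subset M); last by rewrite oppr0.
  rewrite sign_symd1 mulNr; congr (- (_ * _%:R)).
  have -> : Z :|: symd B [set j] = symd (Z :|: B) [set j].
    apply/setP => y; rewrite !inE; case: (eqVneq y j) => [->|]; rewrite ?addbF //.
    have : j \notin Z by apply/negP => /(subsetP ZM); rewrite inE jM.
    by move/negPf ->.
  by rewrite sub_symd1.
rewrite mulrC; congr (_ * _).
rewrite (bigD1 M) //= [X in _ + X]big1 ?addr0.
  by rewrite /G subxx subsetUr mulr1.
move=> B BM; rewrite /G; case: (boolP (B \subset M)) => // sBM.
suff -> : (M \subset Z :|: B) = false by rewrite mulr0.
apply/negP => /subsetP h; move/negP: BM; apply; rewrite eqEsubset sBM /=.
apply/subsetP => y yM; move: (h y yM); rewrite inE => /orP [yZ|//].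
by move: (subsetP ZM y yZ); rewrite inE yM.
Qed.

Lemma infl_lower (R : realType) n (q : mlpoly R n) d i :
  deg_le q d -> (exists S, q S != 0 /\ i \in S) ->
  (2 ^ n <= 2 ^ d * #|[set X | Fq q X != Fq q (symd X [set i])]|)%N.
Proof.
move=> hd [S0 [qS0 iS0]].
have PS0 : (q S0 != 0) && (S0 \subset S0) by rewrite qS0 subxx.
case: (@arg_maxnP _ S0 (fun M : {set 'I_n} => (q M != 0) && (S0 \subset M)) (fun M : {set 'I_n} => #|M|) PS0) => M /andP[qM S0M] maxc.
have maxM : forall S : {set 'I_n}, q S != 0 -> M \subset S -> S = M.
  move=> S qS MS; apply/eqP; rewrite eq_sym eqEcard MS /=.
  by apply: maxc; rewrite qS (subset_trans S0M MS).
have iM : i \in M by apply: (subsetP S0M).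
have iswap : forall Z B : {set 'I_n}, Z \subset ~: M ->
    Z :|: symd B [set i] = symd (Z :|: B) [set i].
  move=> Z B ZM; apply/setP => y; rewrite !inE; case: (eqVneq y i) => [->|]; rewrite ?addbF //.
  have : i \notin Z by apply/negP => /(subsetP ZM); rewrite inE iM.
  by move/negPf ->.
pose P (Z B : {set 'I_n}) := (B \subset M) && (Fq q (Z :|: B) != Fq q (symd (Z :|: B) [set i])).
have key : forall Z : {set 'I_n}, Z \subset ~: M -> exists B, P Z B.
  move=> Z ZM; case: (boolP [exists B, P Z B]) => [/existsP [B PB] | /existsPn h].
    by exists B.
  exfalso; have := alt_sum maxM ZM.
  rewrite (@sum_invol_0 _ _ _ (fun B => symd B [set i])).
  - move/eqP; rewrite eq_sym mulf_eq0 (negPf qM) orbF expf_eq0 oppr_eq0 oner_eq0.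
    by rewrite andbF.
  - by move=> B; apply/setP => y; rewrite !in_symd -addbA addbb addbF.
  move=> B; rewrite subset_symd1 //; case: (boolP (B \subset M)) => BM; last by rewrite oppr0.
  rewrite sign_symd1 mulNr iswap //; congr (- (_ * _)).
  by move: (h B); rewrite /P BM /= negbK => /eqP.
pose pickB (Z : {set 'I_n}) := odflt set0 [pick B | P Z B].
have pickP1 : forall Z : {set 'I_n}, Z \subset ~: M -> P Z (pickB Z).
  move=> Z ZM; rewrite /pickB; case: pickP => [B PB //|none].
  by case: (key Z ZM) => B; rewrite none.
pose hZ (Z : {set 'I_n}) := Z :|: pickB Z.
have hinj : {in powerset (~: M) &, injective hZ}.
  move=> Z1 Z2; rewrite !inE => Z1M Z2M e.
  have f : forall Z : {set 'I_n}, Z \subset ~: M -> hZ Z :\: M = Z.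
    move=> Z ZM; have /andP [BM _] := pickP1 Z ZM.
    apply/setP => y; rewrite !inE; case: (boolP (y \in M)) => yM /=.
      by apply/esym/negP => /(subsetP ZM); rewrite inE yM.
    by case: (boolP (y \in Z)) => //= _; apply/negP => /(subsetP BM); rewrite (negPf yM).
  by rewrite -(f _ Z1M) e f.
have le1 : (#|powerset (~: M)| <= #|[set X | Fq q X != Fq q (symd X [set i])]|)%N.
  rewrite -(card_in_imset hinj); apply: subset_leq_card; apply/subsetP => X.
  case/imsetP => Z; rewrite inE => ZM ->; rewrite inE.
  by have /andP [_ ?] := pickP1 Z ZM.
rewrite card_powerset in le1.
have cM : #|~: M| = (n - #|M|)%N by rewrite cardsCs setCK card_ord.
have Mn : (#|M| <= n)%N by have := subset_leq_card (subsetT M); rewrite cardsT card_ord.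
have Md : (#|M| <= d)%N by exact: hd.
rewrite cM in le1.
rewrite -[X in (2 ^ X <= _)%N](subnKC Mn) expnD; apply: leq_mul; first by rewrite leq_exp2l.
exact: le1.
Qed.

Definition vals (R : realType) n (q : mlpoly R n) : seq R :=
  undup [seq ml_eval q x | x <- enum {: {ffun 'I_n -> bool}}].

Definition ind (R : realType) n (q : mlpoly R n) (v : R) (X : {set 'I_n}) : R :=
  \prod_(u <- rem v (vals q)) ((Fq q X - u) / (v - u)).

Lemma Fq_vals (R : realType) n (q : mlpoly R n) X : Fq q X \in vals q.
Proof. by rewrite mem_undup; apply: map_f; rewrite mem_enum. Qed.

Lemma ind_val (R : realType) n (q : mlpoly R n) v X :
  v \in vals q -> ind q v X = (Fq q X == v)%:R.
Proof.
move=> vV; have uV : uniq (vals q) by exact: undup_uniq.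
rewrite /ind; case: eqP => [->|ne].
  rewrite big1_seq // => u /andP [_]; rewrite (mem_rem_uniq _ uV) inE => /andP [uv _].
  by rewrite divff // subr_eq0 eq_sym.
have : Fq q X \in rem v (vals q).
  by rewrite (mem_rem_uniq _ uV) inE Fq_vals andbT; apply/eqP.
move=> h; rewrite (big_rem _ h) /= subrr mul0r mul0r //.
Qed.

Lemma lowdeg_indv (R : realType) n (q : mlpoly R n) d v :
  deg_le q d -> v \in vals q ->
  lowdeg (d * (size (vals q)).-1) (ind q v).
Proof.
move=> hd vV; rewrite -(size_rem vV); apply: lowdeg_prod => u _.
apply: (lowdeg_ext (g := fun X => (v - u)^-1 * Fq q X + (- (u / (v - u))))).
  by move=> X; rewrite /= mulrC mulrBl.
apply: lowdeg_add; first by apply: lowdeg_scale; exact: lowdeg_Fq.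
exact: (lowdeg_weaken (leq0n d) (lowdeg_const _ _)).
Qed.

Lemma neq_bound (R : realType) n (q : mlpoly R n) X Y :
  (Fq q X != Fq q Y)%:R <= \sum_(v <- vals q) (ind q v X - ind q v Y) ^+ 2 :> R.
Proof.
case: eqP => [_|ne] /=; first by apply: sumr_ge0 => v _; exact: sqr_ge0.
rewrite (big_rem _ (Fq_vals q X)) /= !ind_val ?Fq_vals // eqxx.
have -> : (Fq q Y == Fq q X) = false by apply/eqP => e; apply: ne.
rewrite subr0 expr1n lerDl; apply: sumr_ge0 => v _; exact: sqr_ge0.
Qed.

Lemma card_sumR (R : realType) (T : finType) (P : pred T) :
  (#|[set x | P x]|)%:R = \sum_x (P x)%:R :> R.
Proof.
rewrite -sum1dep_card natr_sum big_mkcond /=; apply: eq_bigr => x _.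
by case: (P x).
Qed.

Lemma sumW_bound (R : realType) n (q : mlpoly R n) d :
  deg_le q d ->
  (\sum_i #|[set X | Fq q X != Fq q (symd X [set i])]|
     <= size (vals q) * (4 * (d * (size (vals q)).-1)) * 2 ^ n)%N.
Proof.
move=> hd; rewrite -(ler_nat R) natr_sum.
under eq_bigr do rewrite card_sumR.
set D := (d * (size (vals q)).-1)%N.
apply: (@le_trans _ _ (\sum_i \sum_X \sum_(v <- vals q)
   (ind q v X - ind q v (symd X [set i])) ^+ 2)).
  by apply: ler_sum => i _; apply: ler_sum => X _; exact: neq_bound.
under eq_bigr do rewrite exchange_big /=.
rewrite exchange_big /=.
apply: (@le_trans _ _ (\sum_(v <- vals q) 4 * D%:R * (2 ^ n)%:R)).
  rewrite big_seq_cond [X in _ <= X]big_seq_cond.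
  apply: ler_sum => v /andP [vV _].
  apply: (le_trans (infl_bound (lowdeg_indv hd vV))).
  rewrite ler_wpM2l ?mulr_ge0 ?ler0n //.
  apply: (@le_trans _ _ (\sum_(X : {set 'I_n}) 1)).
    apply: ler_sum => X _.
    by rewrite ind_val //; case: eqP; rewrite ?expr1n ?expr0n.
  by rewrite sumr_const card_sets.
have -> : forall (s : seq R) (c : R), \sum_(v <- s) c = c * (size s)%:R.
  by move=> s c; elim: s => [|x s IH]; rewrite ?big_nil ?big_cons ?IH /= ?mulr0 // -addn1 natrD; ring.
by rewrite !natrM; lra.
Qed.

Definition Rel (R : realType) n (q : mlpoly R n) : {set 'I_n} :=
  [set i | [exists S, (q S != 0) && (i \in S)]].

Lemma rel_bound (R : realType) n (q : mlpoly R n) d :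
  deg_le q d ->
  (#|Rel q| <= 2 ^ d * (size (vals q) * (4 * (d * (size (vals q)).-1))))%N.
Proof.
move=> hd.
set K := (size (vals q) * (4 * (d * (size (vals q)).-1)))%N.
have h1 : (#|Rel q| * 2 ^ n <= 2 ^ d * (K * 2 ^ n))%N.
  apply: (@leq_trans (2 ^ d * \sum_(i in Rel q) #|[set X | Fq q X != Fq q (symd X [set i])]|)).
    rewrite -sum_nat_const big_distrr /=; apply: leq_sum => i.
    rewrite inE => /existsP [S /andP [qS iS]].
    by apply: infl_lower => //; exists S.
  rewrite leq_mul2l; apply/orP; right.
  apply: leq_trans (sumW_bound hd).
  rewrite [X in (_ <= X)%N](bigID (fun i => i \in Rel q)) /=.
  exact: leq_addr.
rewrite mulnA leq_pmul2r ?expn_gt0 // in h1.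
Qed.

Lemma sparsity_bound (R : realType) n (q : mlpoly R n) d :
  deg_le q d -> (sparsity q <= (#|Rel q|).+1 ^ d)%N.
Proof.
move=> hd.
pose Rs : {set option 'I_n} := None |: (Some @: Rel q).
pose g (t : {ffun 'I_d -> option 'I_n}) : {set 'I_n} := [set x | [exists j, t j == Some x]].
have cRs : #|Rs| = (#|Rel q|).+1.
  rewrite cardsU1 card_imset; last by move=> x y [].
  suff -> : None \notin Some @: Rel q by [].
  by apply/imsetP => [[x _]].
have sub : [set S | q S != 0] \subset [set g t | t in ffun_on Rs].
  apply/subsetP => S; rewrite inE => qS.
  pose s' := [seq Some x | x <- enum S].
  have ss' : size s' = #|S| by rewrite size_map cardE.
  pose t := [ffun j : 'I_d => nth None s' j].
  apply/imsetP; exists t.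
    apply/ffun_onP => j; rewrite ffunE.
    case: (ltnP j (size s')) => [lt|ge]; last by rewrite nth_default // !inE.
    have := mem_nth None lt; case/mapP => x; rewrite mem_enum => xS ->.
    rewrite !inE; apply/imsetP; exists x => //.
    by rewrite inE; apply/existsP; exists S; rewrite qS xS.
  apply/setP => x; rewrite inE; apply/idP/existsP => [xS | [j]].
    have xs' : Some x \in s' by apply: map_f; rewrite mem_enum.
    have lt : (index (Some x) s' < d)%N.
      have h := hd S qS; rewrite -ss' in h; rewrite -index_mem in xs'.
      exact: leq_trans xs' h.
    by exists (Ordinal lt); rewrite ffunE nth_index.
  rewrite ffunE; case: (ltnP j (size s')) => [lt|ge]; last by rewrite nth_default.
  move/eqP => e; have := mem_nth None lt; rewrite e.
  by rewrite mem_map ?mem_enum // => y z [].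
rewrite /sparsity (leq_trans (subset_leq_card sub)) //.
rewrite (leq_trans (leq_imset_card _ _)) //.
by rewrite card_ffun_on cRs card_ord.
Qed.

Lemma nat_arith k d m : (0 < k)%N -> (0 < d)%N ->
  (m <= 2 ^ d * (k * (4 * (d * k.-1))))%N ->
  (m.+1 ^ d <= 2 ^ (2 * d * d * (k + 2)))%N.
Proof.
move=> k0 d0 hm.
have ka : (k < 2 ^ k)%N by exact: ltn_expl.
have db : (d < 2 ^ d)%N by exact: ltn_expl.
have h2 : (m.+1 <= 2 ^ (2 + 2 * k + 2 * d))%N.
  rewrite !mul2n -!addnn !expnD.
  set a := (2 ^ k)%N in ka *; set b := (2 ^ d)%N in db hm *.
  have : (k.-1 <= k)%N by exact: leq_pred.
  have : (k * d * k < a * b * a)%N.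
    by rewrite ltn_mul // ltn_mul.
  move=> h1 h3; have -> : (2 ^ 2 = 4)%N by [].
  have h4 : (k * d * k.-1 <= k * d * k)%N by rewrite leq_mul2l h3 orbT.
  have h5 : (4 * b * (k * d * k) < 4 * b * (a * b * a))%N.
    by rewrite ltn_pmul2l // muln_gt0 expn_gt0.
  have e1 : (b * (k * (4 * (d * k.-1))) = 4 * b * (k * d * k.-1))%N by ring.
  have e2 : (4 * (a * a) * (b * b) = 4 * b * (a * b * a))%N by ring.
  rewrite e2; rewrite e1 in hm.
  exact: leq_ltn_trans hm (leq_ltn_trans (leq_mul (leqnn _) h4) h5).
apply: (leq_trans (n := (2 ^ (2 + 2 * k + 2 * d)) ^ d)); first by rewrite leq_exp2r.
rewrite -expnM leq_exp2l //; nia.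
Qed.

Lemma log2_bound (R : realType) (T E : nat) : (0 < T)%N -> (T <= 2 ^ E)%N ->
  log2 (T%:R : R) <= E%:R.
Proof.
move=> T0 hT; rewrite /log2.
have l2 : 0 < ln (2 : R) by rewrite ln_gt0 // ltr1n.
rewrite ler_pdivrMr //.
have : ln (T%:R : R) <= ln ((2 ^ E)%N%:R).
  by rewrite ler_ln ?posrE ?ltr0n ?expn_gt0 // ler_nat.
by rewrite natrX lnXn ?ltr0n // mulr_natl.
Qed.

Unset Implicit Arguments.

Theorem lemma6p3 (R : realType) (n d : nat) (q : mlpoly R n) :
  (0 < d)%N -> (0 < sparsity q)%N -> deg_le q d ->
  (num_values q)%:R >=
    (2 * (d ^ 2)%:R)^-1 * log2 ((sparsity q)%:R : R) - 2 :> R.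
Proof.
move=> d0 T0 hd.
have k0 : (0 < size (vals q))%N.
  by rewrite lt0n size_eq0; apply/eqP => e; have := Fq_vals q set0; rewrite e.
have hT := leq_trans (sparsity_bound hd) (nat_arith k0 d0 (rel_bound hd)).
have hl := log2_bound R T0 hT.
change (num_values q) with (size (vals q)).
set k := size (vals q) in hl *.
have pos : 0 < 2 * (d ^ 2)%:R :> R by rewrite mulr_gt0 // ltr0n expn_gt0 d0.
have h1 : (2 * (d ^ 2)%:R)^-1 * log2 ((sparsity q)%:R : R) <=
          (2 * (d ^ 2)%:R)^-1 * (2 * d * d * (k + 2))%N%:R.
  by rewrite ler_wpM2l // invr_ge0 ltW.
have e : (2 * (d ^ 2)%:R)^-1 * (2 * d * d * (k + 2))%N%:R = k%:R + 2 :> R.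
  have dn : (d%:R : R) != 0 by rewrite pnatr_eq0 -lt0n.
  rewrite !natrM natrD ?natrX; field.
  exact: dn.
lra.
Qed.
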